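(* The scheme $\Upsilon$ is a commutative normal subgroup of $U_L$ and $U_L=U_\phi\ltimes\Upsilon$. Moreover, given $\beta=\alpha_{ij}\in\Phi(U_\phi)$, there exists a unique root $\alpha\in\Phi(\Upsilon)$ such that $\alpha+\beta$ is a root of $\mathrm{GL}_n$; explicitly $\alpha=\alpha_{pi}$ where $p\in\{1,\dots,d\}$ is determined by $p\equiv i\bmod d$, and then $\alpha+\beta=\alpha_{pj}$.
   Context: $G=\mathrm{GL}_n$ over a field, $1\le d\le n$, $\alpha_{ij}$ the root with root space $kE_{ij}$. $G_0=\{g\in\mathrm{GL}_n:g_{ij}=0\text{ unless }i\equiv j\bmod d\}$, $L$ a group identified with $G_0$ (the Levi quotient of the parahoric attached to $\check\rho/d$), and roots of $L$ are identified with the roots $\alpha_{ij}$, $i\equiv j\bmod d$, of $G_0$. $U_L$ is the unipotent radical of the upper triangular Borel of $L$, i.e. generated by the root subgroups $U_{\alpha_{ij}}$ with $i<j$, $i\equiv j\bmod d$. $U_\phi\subset U_L$ is the subgroup generated by the $U_\alpha$ with $\alpha\in\Phi(U_\phi)=\{\alpha_{ij}: d+1\le i\le n,\ i+d\le j\le n,\ j\equiv i\bmod d\}$, and $\Upsilon=\prod_{\alpha\in\Phi(\Upsilon)}U_\alpha$ with $\Phi(\Upsilon)=\{\alpha_{ij}:1\le i\le d,\ i+d\le j\le n,\ j\equiv i\bmod d\}$ (so $\Phi(\Upsilon)=\Phi(U_L)-\Phi(U_\phi)$). *)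

(* Defs.v *)
(* Indices: 'I_n is 0-based; the paper's index i (1-based)
   corresponds to the ordinal with value i-1. Congruences mod d are unaffected. *)
From HB Require Import structures.
From mathcomp Require Import all_boot all_order all_algebra.
Set Implicit Arguments. Unset Strict Implicit. Unset Printing Implicit Defensive.
Import GRing.Theory.
Local Open Scope ring_scope.

Definition Phi_UL (n d : nat) (i j : 'I_n) : bool :=
  ((i < j)%N && (i %% d == j %% d))%N.

(* Phi(U_phi): d+1 <= i (1-based), i.e. d <= i (0-based); i+d <= j; j = i mod d *)
Definition Phi_Uphi (n d : nat) (i j : 'I_n) : bool :=
  [&& (d <= i)%N, (i + d <= j)%N & (j %% d == i %% d)%N].

(* Phi(Upsilon): 1 <= i <= d (1-based), i.e. i < d (0-based); i+d <= j; j = i mod d *)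
Definition Phi_Ups (n d : nat) (i j : 'I_n) : bool :=
  [&& (i < d)%N, (i + d <= j)%N & (j %% d == i %% d)%N].

(* The R-points of the unipotent subgroup generated by the root subgroups
   U_{alpha_ij} = {1 + t E_ij}, (i,j) in a closed set Phi of positive roots:
   the matrices equal to the identity outside the entries indexed by Phi. *)
Definition supported_on (R : pzRingType) (n : nat) (Phi : 'I_n -> 'I_n -> bool)
  (g : 'M[R]_n) : Prop :=
  forall i j : 'I_n, ~~ Phi i j -> g i j = (i == j)%:R.

Definition U_L (R : pzRingType) (n d : nat) : 'M[R]_n -> Prop :=
  supported_on (@Phi_UL n d).
Definition U_phi (R : pzRingType) (n d : nat) : 'M[R]_n -> Prop :=
  supported_on (@Phi_Uphi n d).
Definition Upsilon (R : pzRingType) (n d : nat) : 'M[R]_n -> Prop :=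
  supported_on (@Phi_Ups n d).

Definition is_subgroup (R : comUnitRingType) (n : nat) (H : 'M[R]_n -> Prop) : Prop :=
  [/\ H 1%:M,
      forall g h, H g -> H h -> H (g *m h)
    & forall g, H g -> g \in unitmx /\ H (invmx g)].

(* The character alpha_ij = e_i - e_j of the diagonal torus, as a vector in Z^n. *)
Definition rootvec (n : nat) (i j : 'I_n) : 'I_n -> int :=
  fun k => ((k == i)%:R - (k == j)%:R)%R.

Definition is_root_GL (n : nat) (v : 'I_n -> int) : Prop :=
  exists p q : 'I_n, p != q /\ forall k, v k = rootvec p q k.

(* Main.v *)
Require Import Defs.
From HB Require Import structures.
From mathcomp Require Import all_boot all_order all_algebra.
From mathcomp Require Import ring zify.
Set Implicit Arguments. Unset Strict Implicit.
Import GRing.Theory.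
Local Open Scope ring_scope.

Section H.
Variable R : comUnitRingType.

Definition zo n (c : 'I_n -> 'I_n -> bool) (A : 'M[R]_n) :=
  forall i j, ~~ c i j -> A i j = 0.

Lemma zo_mul n (c1 c2 c3 : 'I_n -> 'I_n -> bool) A B :
  (forall i k j, c1 i k -> c2 k j -> c3 i j) -> zo c1 A -> zo c2 B -> zo c3 (A *m B).
Proof.
move=> H hA hB i j nc; rewrite mxE big1 // => k _.
case c1ik: (c1 i k); last by rewrite hA ?c1ik // mul0r.
case c2kj: (c2 k j); last by rewrite (hB k j) ?c2kj // mulr0.
by move: nc; rewrite (H _ _ _ c1ik c2kj).
Qed.

Lemma zo_add n (c : 'I_n -> 'I_n -> bool) A B : zo c A -> zo c B -> zo c (A + B).
Proof. by move=> hA hB i j nc; rewrite mxE hA // hB // addr0. Qed.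

Lemma zo_opp n (c : 'I_n -> 'I_n -> bool) A : zo c A -> zo c (- A).
Proof. by move=> hA i j nc; rewrite mxE hA // oppr0. Qed.

Lemma zo_mono n (c1 c2 : 'I_n -> 'I_n -> bool) A :
  (forall i j, c1 i j -> c2 i j) -> zo c1 A -> zo c2 A.
Proof. move=> H hA i j nc; apply: hA; apply/negP => /H; exact/negP. Qed.

Lemma zo0 n (c : 'I_n -> 'I_n -> bool) : zo c 0.
Proof. by move=> i j _; rewrite mxE. Qed.

Lemma zo_zero n (c1 c2 : 'I_n -> 'I_n -> bool) A B :
  (forall i k j, c1 i k -> c2 k j -> false) -> zo c1 A -> zo c2 B -> A *m B = 0.
Proof.
move=> H hA hB; apply/matrixP => i j.
rewrite (@zo_mul n c1 c2 (fun _ _ => false)) ?mxE //.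
Qed.

Lemma supp_zo n (c : 'I_n -> 'I_n -> bool) (g : 'M[R]_n) :
  supported_on c g <-> zo c (g - 1%:M).
Proof.
split=> h i j nc.
  by rewrite !mxE h // subrr.
by move: (h i j nc); rewrite !mxE => /eqP; rewrite subr_eq0 => /eqP.
Qed.

Lemma ident n (g h : 'M[R]_n) :
  g *m h - 1%:M = (g - 1%:M) + (h - 1%:M) + (g - 1%:M) *m (h - 1%:M).
Proof.
rewrite mulmxBl !mulmxBr mul1mx mulmx1 mulmx1.
apply/matrixP => i j; rewrite !mxE.
ring.
Qed.

Definition strict_trans n (c : 'I_n -> 'I_n -> bool) :=
  (forall i j, c i j -> (i < j)%N) /\ (forall i k j, c i k -> c k j -> c i j).

Lemma zo_mulc n (c : 'I_n -> 'I_n -> bool) A B :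
  strict_trans c -> zo c A -> zo c B -> zo c (A *m B).
Proof. by move=> [_ T]; apply: zo_mul. Qed.

Lemma nilp n (c : 'I_n.+1 -> 'I_n.+1 -> bool) (N : 'M[R]_n.+1) :
  strict_trans c -> zo c N -> N ^+ n.+1 = 0.
Proof.
move=> [S T] hN.
have: forall k, zo (fun i j => c i j && (i + k < j)%N) (N ^+ k.+1).
  elim=> [|k IH].
    rewrite expr1; apply: zo_mono hN => i j h; rewrite h /= addn0; exact: S.
  rewrite exprS -mulmxE; apply: zo_mul hN IH => i l j h1 /andP[h2 h3].
  rewrite (T _ _ _ h1 h2) /=; have := S _ _ h1; lia.
move/(_ n) => h; apply/matrixP => i j; rewrite h ?mxE //.
apply/negP => /andP[_ hl]; have := ltn_ord j; lia.
Qed.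

Lemma unip n (c : 'I_n.+1 -> 'I_n.+1 -> bool) (g : 'M[R]_n.+1) :
  strict_trans c -> zo c (g - 1%:M) ->
  g \in unitmx /\ zo c (invmx g - 1%:M).
Proof.
move=> st hN; set N := g - 1%:M.
have gE : g = 1 + N by rewrite /N addrC subrK.
set S := \sum_(k < n.+1) (- N) ^+ k.
have hS : g *m S = 1%:M.
  have := subrX1 (- N) n.+1.
  rewrite (nilp st (zo_opp hN)) sub0r -opprD mulNr => /oppr_inj.
  by rewrite addrC -gE mulmxE.
have [gu _] := mulmx1_unit hS.
have iE : invmx g = S by rewrite -[S](mulKmx gu) hS mulmx1.
split=> //; rewrite iE /S big_ord_recl expr0 -[1]/(1%:M) [1%:M + _]addrC addrK.
apply: (big_ind (zo c)); [exact: zo0 | exact: zo_add|] => k _.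
rewrite lift0; elim: (k : nat) => [|m IH]; first by rewrite expr1; exact: zo_opp.
rewrite exprS -mulmxE; apply: zo_mulc => //; exact: zo_opp.
Qed.

Lemma subgrp n (c : 'I_n.+1 -> 'I_n.+1 -> bool) :
  strict_trans c -> is_subgroup (supported_on (R:=R) c).
Proof.
move=> st; split.
- by apply/supp_zo; rewrite subrr; exact: zo0.
- move=> g h /supp_zo hg /supp_zo hh; apply/supp_zo; rewrite ident.
  apply: zo_add; first exact: zo_add.
  exact: zo_mulc.
- move=> g /supp_zo hg; have [u hi] := unip st hg; split=> //; exact/supp_zo.
Qed.

End H.

Local Close Scope ring_scope.
Lemma cong_gap (d i j : nat) : (0 < d)%N -> (i < j)%N -> i %% d = j %% d -> (i + d <= j)%N.
Proof.
move=> d0 ij e.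
have : (d %| j - i)%N%N by rewrite -eqn_mod_dvd ?(ltnW ij) // e.
move/(dvdn_leq); rewrite subn_gt0 => /(_ ij) h; lia.
Qed.

Local Open Scope ring_scope.
Lemma solve_eq (R : comUnitRingType) (x y z w : R) :
  z - w = (x - w) + (y - w) -> y = w -> x = z.
Proof. by move=> h yw; rewrite yw subrr addr0 in h; rewrite -(subrK w x) -h subrK. Qed.

Lemma neqo m (x y : 'I_m) : (x : nat) <> y -> (x == y) = false.
Proof. by move=> h; apply/eqP => e; apply: h; rewrite e. Qed.

Lemma int_val1 (b1 b2 : bool) : (1%:R - 0%:R + (0%:R - 0%:R) : int) = b1%:R - b2%:R -> b1 && ~~ b2.
Proof. by case: b1; case: b2 => //= /eqP. Qed.

Lemma int_val0 (b1 b2 : bool) : (0%:R - 0%:R + (1%:R - 0%:R) : int) = b1%:R - b2%:R -> b1 && ~~ b2.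
Proof. by case: b1; case: b2 => //= /eqP. Qed.

Theorem lemma10p1 (R : comUnitRingType) (n d : nat) (hd1 : (1 <= d)%N) (hdn : (d <= n)%N) :
  (* Upsilon is a subgroup of U_L *)
  (is_subgroup (@Upsilon R n d) /\ (forall g : 'M[R]_n, Upsilon d g -> U_L d g)) /\
  (* Upsilon is commutative *)
  (forall g h : 'M[R]_n, Upsilon d g -> Upsilon d h -> g *m h = h *m g) /\
  (* Upsilon is normal in U_L *)
  (forall u g : 'M[R]_n, U_L d u -> Upsilon d g -> Upsilon d (u *m g *m invmx u)) /\
  (* U_L = U_phi |x Upsilon : U_phi is a subgroup of U_L and every element of U_L
     is uniquely a product a * b with a in U_phi, b in Upsilon *)
  (is_subgroup (@U_phi R n d) /\ (forall g : 'M[R]_n, U_phi d g -> U_L d g)) /\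
  (forall u : 'M[R]_n, U_L d u ->
     exists! ab : 'M[R]_n * 'M[R]_n,
       [/\ U_phi d ab.1, Upsilon d ab.2 & u = ab.1 *m ab.2]) /\
  (* root statement *)
  (forall i j : 'I_n, Phi_Uphi d i j ->
     (exists! pq : 'I_n * 'I_n,
        Phi_Ups d pq.1 pq.2 /\
        is_root_GL (fun k => rootvec pq.1 pq.2 k + rootvec i j k)) /\
     (forall p q : 'I_n, Phi_Ups d p q ->
        is_root_GL (fun k => rootvec p q k + rootvec i j k) ->
        [/\ (p < d)%N, (p %% d = i %% d)%N, q = i &
            forall k, rootvec p q k + rootvec i j k = rootvec p j k])).
Proof.
case: n hdn => [|n] hdn; first by have := leq_trans hd1 hdn.
have stL : strict_trans (@Phi_UL n.+1 d).
  split; first by move=> i j /andP[].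
  move=> i k j /andP[h1 /eqP e1] /andP[h2 /eqP e2].
  by rewrite /Phi_UL (ltn_trans h1 h2) e1 e2 eqxx.
have stP : strict_trans (@Phi_Uphi n.+1 d).
  split; first by move=> i j /and3P[_ h _]; lia.
  move=> i k j /and3P[a1 a2 /eqP a3] /and3P[b1 b2 /eqP b3].
  apply/and3P; split=> //; last by rewrite b3 a3.
  exact: leq_trans a2 (leq_trans (leq_addr d k) b2).
have zUU : forall i k j : 'I_n.+1, Phi_Ups d i k -> Phi_Ups d k j -> false.
  by move=> i k j /and3P[_ h _] /and3P[h' _ _]; lia.
have stU : strict_trans (@Phi_Ups n.+1 d).
  split; first by move=> i j /and3P[_ h _]; lia.
  by move=> i k j h1 h2; have := zUU _ _ _ h1 h2.
have zPU : forall i k j : 'I_n.+1, Phi_Uphi d i k -> Phi_Ups d k j -> false.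
  by move=> i k j /and3P[h1 h2 _] /and3P[h' _ _]; lia.
have disj : forall i j : 'I_n.+1, Phi_Uphi d i j -> Phi_Ups d i j -> false.
  by move=> i j /and3P[h1 _ _] /and3P[h' _ _]; lia.
have LPU : forall i j : 'I_n.+1, Phi_UL d i j = Phi_Uphi d i j || Phi_Ups d i j.
  move=> i j; rewrite /Phi_UL /Phi_Uphi /Phi_Ups [(j %% d)%N == _]eq_sym.
  case: eqP => e; rewrite ?andbF //= !andbT.
  have -> : (i < j)%N = (i + d <= j)%N.
    apply/idP/idP => h; first exact: cong_gap.
    lia.
  by case: (leqP d i); rewrite ?andbF ?andbT ?orbF.
have sub : forall (c1 c2 : 'I_n.+1 -> 'I_n.+1 -> bool) (g : 'M[R]_n.+1),
    (forall i j, c1 i j -> c2 i j) -> supported_on c1 g -> supported_on c2 g.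
  move=> c1 c2 g H /supp_zo h; apply/supp_zo; exact: zo_mono h.
split.
  split; first exact: subgrp.
  by move=> g; apply: sub => i j h; rewrite LPU h orbT.
split.
  move=> g h /supp_zo hg /supp_zo hh.
  have e1 : g *m h - 1%:M = h *m g - 1%:M.
    rewrite !ident (zo_zero zUU hg hh) (zo_zero zUU hh hg) !addr0; exact: addrC.
  by rewrite -(subrK 1%:M (g *m h)) e1 subrK.
split.
  move=> u g /supp_zo hu /supp_zo hg; apply/supp_zo.
  have [uu _] := unip stL hu.
  have [_ hX] := unip stL hu.
  have gE : g = 1%:M + (g - 1%:M) by rewrite addrC subrK.
  rewrite {1}gE mulmxDr mulmx1 mulmxDl (mulmxV uu) [1%:M + _]addrC addrK.
  pose Le := fun i j : 'I_n.+1 => Phi_UL d i j || (i == j).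
  have zLe : forall A : 'M[R]_n.+1, zo (Phi_UL d) (A - 1%:M) -> zo Le A.
    move=> A hA; rewrite -(subrK 1%:M A); apply: zo_add.
      by apply: zo_mono hA => i j h; rewrite /Le h.
    move=> i j; rewrite /Le negb_or => /andP[_ /negbTE h]; by rewrite mxE h.
  apply: (zo_mul (c1 := Phi_Ups d) (c2 := Le)); last exact: zLe.
    move=> i k j h1; rewrite /Le; case: eqP => [<-|_]; rewrite ?orbT // orbF.
    move: h1 => /and3P[a1 a2 /eqP a3] /andP[b1 /eqP b2].
    apply/and3P; split=> //; first lia.
    by rewrite -b2 a3.
  apply: (zo_mul (c1 := Le) (c2 := Phi_Ups d)) hg; last exact: zLe.
  move=> i k j; rewrite /Le; case: eqP => [->|_] //; rewrite orbF.
  move=> /andP[a1 /eqP a2] /and3P[b1 b2 /eqP b3].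
  apply/and3P; split; [lia | lia | by rewrite b3 a2].
split.
  split; first exact: subgrp.
  by move=> g; apply: sub => i j h; rewrite LPU h.
split.
  move=> u hu0; have hu := (iffLR (supp_zo _ _) hu0).
  have key : forall a' b' : 'M[R]_n.+1, U_phi d a' -> Upsilon d b' -> u = a' *m b' ->
      a' = \matrix_(i, j) (if Phi_Uphi d i j then u i j else (i == j)%:R) /\
      b' = \matrix_(i, j) (if Phi_Ups d i j then u i j else (i == j)%:R).
    move=> a' b' ha0 hb0 E.
    have ha := iffLR (supp_zo _ _) ha0; have hb := iffLR (supp_zo _ _) hb0.
    have e : u - 1%:M = (a' - 1%:M) + (b' - 1%:M).
      by rewrite E ident (zo_zero zPU ha hb) addr0.
    split; apply/matrixP => i j; rewrite mxE; have := congr1 (fun M : 'M[R]_n.+1 => M i j) e;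
      rewrite !mxE.
    - case hP: (Phi_Uphi d i j); last by rewrite ha0 ?hP.
      move=> h; apply: solve_eq h _; apply: hb0; apply/negP => hU.
      by have := disj _ _ hP hU.
    - case hU: (Phi_Ups d i j); last by rewrite hb0 ?hU.
      move=> h; apply: (solve_eq (y := a' i j) (w := (i == j)%:R)); first by rewrite h addrC.
      apply: ha0; apply/negP => hP.
      by have := disj _ _ hP hU.
  pose a := \matrix_(i, j) (if Phi_Uphi d i j then u i j else (i == j)%:R) : 'M[R]_n.+1.
  pose b := \matrix_(i, j) (if Phi_Ups d i j then u i j else (i == j)%:R) : 'M[R]_n.+1.
  have ha0 : U_phi d a by move=> i j nc; rewrite mxE (negbTE nc).
  have hb0 : Upsilon d b by move=> i j nc; rewrite mxE (negbTE nc).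
  exists (a, b); split.
    split=> //=.
    have ha := iffLR (supp_zo _ _) ha0; have hb := iffLR (supp_zo _ _) hb0.
    suff e : u - 1%:M = a *m b - 1%:M by rewrite -(subrK 1%:M u) e subrK.
    rewrite ident (zo_zero zPU ha hb) addr0; apply/matrixP => i j; rewrite !mxE.
    case hP: (Phi_Uphi d i j).
      have -> : Phi_Ups d i j = false by apply/negP => hU; have := disj _ _ hP hU.
      by rewrite subrr addr0.
    case hU: (Phi_Ups d i j); first by rewrite subrr add0r.
    by rewrite hu0 ?LPU ?hP ?hU // subrr addr0.
  move=> [a' b'] /= [ha' hb' e].
  by have [-> ->] := key a' b' ha' hb' e.
move=> i j hij.
have d0 : (0 < d)%N by [].
have P2 : forall p q : 'I_n.+1, Phi_Ups d p q ->
    is_root_GL (fun k => rootvec p q k + rootvec i j k) ->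
    [/\ (p < d)%N, (p %% d = i %% d)%N, q = i &
        forall k, rootvec p q k + rootvec i j k = rootvec p j k].
  move=> p q hpq [a [b [ab H]]].
  move: (hpq) (hij) => /and3P[p1 p2 /eqP p3] /and3P[i1 i2 /eqP i3].
  have qi : q = i.
    case: (eqVneq q i) => // /negbTE qi.
    have := H p; rewrite /rootvec eqxx (neqo (x:=p) (y:=q)) ?(neqo (x:=p) (y:=i))
      ?(neqo (x:=p) (y:=j)); try lia.
    move/int_val1 => /andP[/eqP pa _].
    have := H i; rewrite /rootvec eqxx (eq_sym i q) qi (neqo (x:=i) (y:=p))
      ?(neqo (x:=i) (y:=j)); try lia.
    move=> /int_val0 /andP[/eqP ia _].
    by move: p1 i1; rewrite pa ia; lia.
  split=> //.
  - by rewrite -qi p3.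
  - by move=> k; rewrite qi /rootvec; ring.
move: (hij) => /and3P[i1 i2 /eqP i3].
have p0lt : (i %% d < n.+1)%N by apply: leq_trans (ltn_pmod _ d0) hdn.
pose p0 := Ordinal p0lt.
have hp0 : Phi_Ups d p0 i.
  apply/and3P; split; rewrite /= ?modn_mod ?ltn_pmod //.
  have -> : (i : nat) = (i - d + d)%N by rewrite subnK.
  rewrite modnDr; have := leq_mod (i - d) d; lia.
split=> //.
exists (p0, i); split.
  split=> //=; exists p0, j; split.
    by apply/negP => /eqP/(congr1 val) /= e; move: (ltn_pmod i d0); lia.
  by move=> k; rewrite /rootvec; ring.
move=> [p' q'] /= [hpq hr].
have [pl pm qi _] := P2 _ _ hpq hr.
rewrite qi; congr pair; apply/val_inj => /=.
by rewrite -pm modn_small.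
Qed.
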